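(* Let $a\in\mathrm{Ext}_{\mathcal A(1)}(\mathbb M_2,\mathbb M_2)$ be the class detected in the $\rho$-Bockstein spectral sequence by $\tau^2v_0$. Then $a\,\eta=\rho\,\eta_0^2$ in $\mathrm{Ext}_{\mathcal A(1)}(\mathbb M_2,\mathbb M_2)$.
   Context: $\mathbb M_2=\mathbb F_2[\tau,\rho]$; $\mathcal A(1)=\big(\mathbb M_2,\mathbb M_2[\xi_1,\tau_0,\tau_1]/(\xi_1^2,\ \tau_0^2-\rho\tau_1-\rho\tau_0\xi_1-\tau\xi_1,\ \tau_1^2)\big)$ with $\eta_R(\tau)=\tau+\rho\tau_0$, $\eta_R(\rho)=\rho$. The $\rho$-Bockstein spectral sequence has $E_1=\mathbb F_2[\rho,\tau,v_0,\eta,x,v_1^4]/(v_0\eta,\tau\eta^3,\eta x,x^2-v_0^2v_1^4)$, $v_0=[\tau_0]$, $\eta=[\xi_1]$, $d_1(\tau)=\rho v_0$, $d_2(\tau^2)=\rho^2\eta_0$, where $\eta_0=[\tau_0^2]$ is the permanent cycle detected by $\tau\eta$. The element $\tau^2v_0$ is a permanent cycle (cobar representative $\tau^2\tau_0+\tau\rho\tau_0^2+\rho^2\tau_0^3$). *)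

(* Defs.v *)
(* Explicit model of the cobar complex of the Hopf algebroid
   A(1) = (M2, Gamma) in cobar degrees 1 -> 2, with M2 = F2[rho,tau].
   Multivariate polynomials are modelled by nested {poly _} over 'F_2. *)
From HB Require Import structures.
From mathcomp Require Import all_boot all_order all_algebra.
Set Implicit Arguments. Unset Strict Implicit. Unset Printing Implicit Defensive.
Import GRing.Theory.
Local Open Scope ring_scope.

Definition K := 'F_2.
HB.instance Definition _ := GRing.Field.on K.
(* P1 = F2[rho], P2 = P1[tau], P3 = P2[xi1], P4 = P3[tau0], P5 = P4[tau1]:
   P5 is the free polynomial ring of which Gamma is a quotient. *)
Definition P1 := {poly K}.
HB.instance Definition _ := GRing.IntegralDomain.on P1.
Definition P2 := {poly P1}.
HB.instance Definition _ := GRing.IntegralDomain.on P2.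
Definition P3 := {poly P2}.
HB.instance Definition _ := GRing.IntegralDomain.on P3.
Definition P4 := {poly P3}.
HB.instance Definition _ := GRing.IntegralDomain.on P4.
Definition P5 := {poly P4}.
HB.instance Definition _ := GRing.IntegralDomain.on P5.
(* P6 = P5[xi1'], P7 = P6[tau0'], P8 = P7[tau1']: the free polynomial ring
   of which Gamma (x)_{M2} Gamma is a quotient; the unprimed generators
   are those of the left tensor factor, the primed ones those of the right. *)
Definition P6 := {poly P5}.
HB.instance Definition _ := GRing.IntegralDomain.on P6.
Definition P7 := {poly P6}.
HB.instance Definition _ := GRing.IntegralDomain.on P7.
Definition P8 := {poly P7}.
HB.instance Definition _ := GRing.IntegralDomain.on P8.

Definition rho5  : P5 := polyC (polyC (polyC (polyC ('X : P1)))).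
Definition tau5  : P5 := polyC (polyC (polyC ('X : P2))).
Definition xi5   : P5 := polyC (polyC ('X : P3)).
Definition tau05 : P5 := polyC ('X : P4).
Definition tau15 : P5 := ('X : P5).

Definition lift58 (p : P5) : P8 := polyC (polyC (polyC p)).
Definition rho8   : P8 := lift58 rho5.
Definition tau8   : P8 := lift58 tau5.
Definition xi8    : P8 := lift58 xi5.
Definition tau08  : P8 := lift58 tau05.
Definition tau18  : P8 := lift58 tau15.
Definition xi8'   : P8 := polyC (polyC ('X : P6)).
Definition tau08' : P8 := polyC ('X : P7).
Definition tau18' : P8 := ('X : P8).

Definition cst8 (k : K) : P8 :=
  polyC (polyC (polyC (polyC (polyC (polyC (polyC (polyC k))))))).

(* the ring map P5 -> P8 sending rho,tau,xi1,tau0,tau1 to x1,...,x5 *)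
Definition ev5 (x1 x2 x3 x4 x5 : P8) (p : P5) : P8 :=
  (map_poly (fun p4 : P4 =>
    (map_poly (fun p3 : P3 =>
      (map_poly (fun p2 : P2 =>
        (map_poly (fun p1 : P1 => (map_poly cst8 p1).[x1]) p2).[x2])
      p3).[x3]) p4).[x4]) p).[x5].

Definition in_ideal (R : comNzRingType) (gens : seq R) (x : R) : Prop :=
  exists qs : seq R, size qs = size gens /\
    x = \sum_(i < size gens) qs`_i * gens`_i.

(* Gamma (x)_{M2} Gamma = P8 / (xi1^2, tau1^2, tau0^2 - rho tau1 - rho tau0 xi1 - tau xi1,
   and the same relations for the right factor, where tau acts on the right
   factor through eta_R(tau) = tau + rho tau0). *)
Definition GG_rels : seq P8 :=
  [:: xi8 ^+ 2; tau18 ^+ 2;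
      tau08 ^+ 2 - rho8 * tau18 - rho8 * tau08 * xi8 - tau8 * xi8;
      xi8' ^+ 2; tau18' ^+ 2;
      tau08' ^+ 2 - rho8 * tau18' - rho8 * tau08' * xi8'
        - (tau8 + rho8 * tau08) * xi8'].

Definition eqGG (x y : P8) : Prop := in_ideal GG_rels (x - y).

Definition iotaL : P5 -> P8 := ev5 rho8 tau8 xi8 tau08 tau18.
(* gamma |-> 1 (x) gamma  (M2 acts through eta_R: tau |-> tau + rho tau0) *)
Definition iotaR : P5 -> P8 := ev5 rho8 (tau8 + rho8 * tau08) xi8' tau08' tau18'.
Definition Delta : P5 -> P8 :=
  ev5 rho8 tau8 (xi8 + xi8') (tau08 + tau08') (tau18 + xi8 * tau08' + tau18').

(* cobar differential C^1 = Gamma -> C^2 = Gamma (x)_{M2} Gamma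
   (signs are irrelevant in characteristic 2) *)
Definition cobar_d1 (c : P5) : P8 := iotaR c + Delta c + iotaL c.

Definition cobar_mul11 (x y : P5) : P8 := iotaL x * iotaR y.

Definition a_rep : P5 :=
  tau5 ^+ 2 * tau05 + tau5 * rho5 * tau05 ^+ 2 + rho5 ^+ 2 * tau05 ^+ 3.
Definition eta_rep : P5 := xi5.
Definition eta0_rep : P5 := tau05 ^+ 2.

(* Main.v *)
From HB Require Import structures.
From Stdlib Require Import Ring JMeq.
Require Import Defs.
From mathcomp Require Import all_boot all_order all_algebra.
Set Implicit Arguments. Unset Strict Implicit. Unset Printing Implicit Defensive.
Import GRing.Theory.
Local Open Scope ring_scope.

Definition rm (R S : comNzRingType) (f : R -> S) : Prop :=
  [/\ f 0 = 0, f 1 = 1, forall a b, f (a + b) = f a + f b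
    & forall a b, f (a * b) = f a * f b].

Section RM.
Variables (R S : comNzRingType) (f : R -> S).
Hypothesis hf : rm f.
Lemma rm0 : f 0 = 0. Proof. by case: hf. Qed.
Lemma rm1 : f 1 = 1. Proof. by case: hf. Qed.
Lemma rmD a b : f (a + b) = f a + f b. Proof. by case: hf. Qed.
Lemma rmM a b : f (a * b) = f a * f b. Proof. by case: hf. Qed.
Lemma rmX a n : f (a ^+ n) = f a ^+ n.
Proof. elim: n => [|n IH]; first by rewrite !expr0 rm1. by rewrite !exprS rmM IH. Qed.
Lemma rmN a : f (- a) = - f a.
Proof. by apply/eqP; rewrite -subr_eq0 opprK -rmD addNr rm0. Qed.
Lemma rmB a b : f (a - b) = f a - f b. Proof. by rewrite rmD rmN. Qed.

Lemma rm_sum (I : Type) (r : seq I) (F : I -> R) (P : pred I) :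
  f (\sum_(i <- r | P i) F i) = \sum_(i <- r | P i) f (F i).
Proof. exact: (big_morph f rmD rm0). Qed.

Lemma mp_D p q : map_poly f (p + q) = map_poly f p + map_poly f q.
Proof. by apply/polyP=> i; rewrite coefD !coef_map_id0 ?rm0 // coefD rmD. Qed.
Lemma mp_M p q : map_poly f (p * q) = map_poly f p * map_poly f q.
Proof.
apply/polyP=> i; rewrite coef_map_id0 ?rm0 // !coefM rm_sum.
by apply: eq_bigr => j _; rewrite rmM !coef_map_id0 ?rm0.
Qed.
Lemma mp_1 : map_poly f 1 = 1.
Proof.
apply/polyP=> i; rewrite coef_map_id0 ?rm0 // !coef1.
by case: (i == 0)%N; rewrite ?rm1 ?rm0.
Qed.
Lemma mp_C a : map_poly f a%:P = (f a)%:P.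
Proof.
apply/polyP=> i; rewrite coef_map_id0 ?rm0 // !coefC.
by case: (i == 0)%N; rewrite ?rm0.
Qed.
Lemma mp_X : map_poly f 'X = 'X.
Proof.
apply/polyP=> i; rewrite coef_map_id0 ?rm0 // !coefX.
by case: (i == 1)%N; rewrite ?rm1 ?rm0.
Qed.

Lemma rm_horner (x : S) : rm (fun p : {poly R} => (map_poly f p).[x]).
Proof.
split.
- by rewrite map_poly0 horner0.
- by rewrite mp_1 hornerC.
- by move=> p q; rewrite mp_D hornerD.
- by move=> p q; rewrite mp_M hornerM.
Qed.
Lemma hC (x : S) a : (map_poly f a%:P).[x] = f a.
Proof. by rewrite mp_C hornerC. Qed.
Lemma hX (x : S) : (map_poly f 'X).[x] = x.
Proof. by rewrite mp_X hornerX. Qed.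

Lemma rm_polyC : rm (fun a => (f a)%:P : {poly S}).
Proof.
split.
- by rewrite rm0.
- by rewrite rm1.
- by move=> a b; rewrite rmD polyCD.
- by move=> a b; rewrite rmM polyCM.
Qed.
End RM.

Lemma rm_ext (R S : comNzRingType) (f g : R -> S) : f =1 g -> rm f -> rm g.
Proof.
move=> e [h0 h1 hD hM]; split.
- by rewrite -e.
- by rewrite -e.
- by move=> a b; rewrite -!e.
- by move=> a b; rewrite -!e.
Qed.

Section S.
Variable R : comNzRingType.
Hypothesis two : (1 + 1 : R) = 0.
Definition radd (x y : R) : R := x + y.
Definition rmul (x y : R) : R := x * y.
Definition ropp (x : R) : R := - x.
Definition rsub (x y : R) : R := radd x (ropp y).
Definition r0 : R := 0.
Definition r1 : R := 1.
Lemma R_rt : @ring_theory R r0 r1 radd rmul rsub ropp eq.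
Proof.
constructor; rewrite /radd /rmul /rsub /ropp /r0 /r1;
 [exact: add0r|exact: addrC|exact: addrA|exact: mul1r|exact: mulrC
 |exact: mulrA|exact: mulrDl|by []|exact: subrr].
Qed.
Definition b2R (b : bool) : R := if b then r1 else r0.
Lemma oppr_char2 (x : R) : - x = x.
Proof. apply: (addrI x); rewrite addrN -[x]mul1r -mulrDl two mul0r //. Qed.
Lemma R_morph : ring_morph r0 r1 radd rmul rsub ropp eq
  false true xorb andb xorb (fun b => b) Bool.eqb b2R.
Proof.
rewrite /b2R /radd /rmul /rsub /ropp /r0 /r1.
constructor=> //.
- by case; case=> /=; rewrite ?addr0 ?add0r ?two.
- by case; case=> /=; rewrite /radd ?oppr_char2 ?addr0 ?add0r ?two.
- by case; case=> /=; rewrite ?mulr1 ?mulr0 ?mul0r.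
- by case=> /=; rewrite ?oppr_char2 ?oppr0.
- by case; case.
Qed.
Add Ring Rring : R_rt (morphism R_morph).
Lemma addE (x y : R) : x + y = radd x y. Proof. by []. Qed.
Lemma mulE (x y : R) : x * y = rmul x y. Proof. by []. Qed.
Lemma oppE (x : R) : - x = ropp x. Proof. by []. Qed.

Variables (fL fR fD : P5 -> R) (hL : rm fL) (hR : rm fR) (hD : rm fD).
Variables (r t x a b x' a' b' : R) (p1 p2 p3 p4 p5 : P5).
Hypotheses (L1 : fL p1 = r) (L2 : fL p2 = t) (L3 : fL p3 = x)
  (L4 : fL p4 = a) (L5 : fL p5 = b).
Hypotheses (R1 : fR p1 = r) (R2 : fR p2 = t + r * a) (R3 : fR p3 = x')
  (R4 : fR p4 = a') (R5 : fR p5 = b').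
Hypotheses (D1 : fD p1 = r) (D2 : fD p2 = t) (D3 : fD p3 = x + x')
  (D4 : fD p4 = a + a') (D5 : fD p5 = b + x * a' + b').

Lemma ident :
  fR (p2 ^+ 2 * p5 + p2 ^+ 2 * p3 * p4) + fD (p2 ^+ 2 * p5 + p2 ^+ 2 * p3 * p4)
  + fL (p2 ^+ 2 * p5 + p2 ^+ 2 * p3 * p4)
  - (fL (p2 ^+ 2 * p4 + p2 * p1 * p4 ^+ 2 + p1 ^+ 2 * p4 ^+ 3) * fR p3
     - r * (fL (p4 ^+ 2) * fR (p4 ^+ 2)))
  = (r * a' ^+ 2 + r * t * x' + r ^+ 2 * b' + r ^+ 2 * x' * a' + r ^+ 2 * a * x')
      * (a ^+ 2 - r * b - r * a * x - t * x)
    + (r * t * x + r ^+ 2 * b + r ^+ 2 * x * a)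
      * (a' ^+ 2 - r * b' - r * a' * x' - (t + r * a) * x').
Proof.
rewrite !(rmD hL, rmM hL, rmX hL) !(rmD hR, rmM hR, rmX hR) !(rmD hD, rmM hD, rmX hD).
rewrite ?L1 ?L2 ?L3 ?L4 ?L5 ?R1 ?R2 ?R3 ?R4 ?R5 ?D1 ?D2 ?D3 ?D4 ?D5.
rewrite ?expr2 ?exprS ?expr0 ?oppE ?addE ?mulE.
match goal with |- ?u = ?v => change (@eq (GRing.ComNzRing.sort R) u v) end.
ring.
Qed.
End S.

Lemma sum6 (R : comNzRingType) (a2 a5 : R) (gs : seq R) : size gs = 6%N ->
  \sum_(i < size gs) [:: 0; 0; a2; 0; 0; a5]`_i * gs`_i = a2 * gs`_2 + a5 * gs`_5.
Proof.
case: gs => [|g0 [|g1 [|g2 [|g3 [|g4 [|g5 [|g6 gs]]]]]]] //= _.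
rewrite !big_ord_recl big_ord0 /= !mul0r !add0r addr0.
by [].
Qed.

Definition D1 (k : K) : P1 := @polyC K k.
Definition D2 (k : K) : P2 := @polyC P1 (D1 k).
Definition D3 (k : K) : P3 := @polyC P2 (D2 k).
Definition D4 (k : K) : P4 := @polyC P3 (D3 k).
Definition D5 (k : K) : P5 := @polyC P4 (D4 k).
Definition D6 (k : K) : P6 := @polyC P5 (D5 k).
Definition D7 (k : K) : P7 := @polyC P6 (D6 k).
Definition D8 (k : K) : P8 := @polyC P7 (D7 k).

Notation pi := poly_polynomial__canonical__GRing_NzSemiRing.
Notation Q0 := Defs_K__canonical__GRing_NzSemiRing.
Definition I1 : nzSemiRingType := P1.
Definition I2 : nzSemiRingType := P2.
Definition I3 : nzSemiRingType := P3.
Definition I4 : nzSemiRingType := P4.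
Definition I5 : nzSemiRingType := P5.
Definition I6 : nzSemiRingType := P6.
Definition I7 : nzSemiRingType := P7.
Lemma e1 : pi Q0 = I1. Proof. reflexivity. Qed.
Lemma e2 : pi I1 = I2. Proof. reflexivity. Qed.
Lemma e3 : pi I2 = I3. Proof. reflexivity. Qed.
Lemma e4 : pi I3 = I4. Proof. reflexivity. Qed.
Lemma e5 : pi I4 = I5. Proof. reflexivity. Qed.
Lemma e6 : pi I5 = I6. Proof. reflexivity. Qed.
Lemma e7 : pi I6 = I7. Proof. reflexivity. Qed.
Lemma stepJ (R R' : nzSemiRingType) (e : R = R') (g : K -> R) (g' : K -> R')
  (h : JMeq g g') : JMeq (fun k => @polyC R (g k)) (fun k => @polyC R' (g' k)).
Proof. subst R'. by rewrite (JMeq_eq h). Qed.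
Lemma J0 : JMeq (fun k : K => k) (fun k : K => k). Proof. by []. Qed.
Definition J1 := @stepJ _ _ (erefl Q0) _ _ J0.
Definition E2 : pi (pi Q0) = I2. Proof. by rewrite e1 e2. Qed.
Definition E1 := e1.
Definition E3 : pi (pi (pi Q0)) = I3. Proof. by rewrite E2 e3. Defined.
Definition E4 : pi (pi (pi (pi Q0))) = I4. Proof. by rewrite E3 e4. Defined.
Definition E5 : pi (pi (pi (pi (pi Q0)))) = I5. Proof. by rewrite E4 e5. Defined.
Definition E6 : pi (pi (pi (pi (pi (pi Q0))))) = I6. Proof. by rewrite E5 e6. Defined.
Definition E7 : pi (pi (pi (pi (pi (pi (pi Q0)))))) = I7. Proof. by rewrite E6 e7. Defined.
Definition J2 := @stepJ _ _ E1 _ _ J1.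
Definition J3 := @stepJ _ _ E2 _ _ J2.
Definition J4 := @stepJ _ _ E3 _ _ J3.
Definition J5 := @stepJ _ _ E4 _ _ J4.
Definition J6 := @stepJ _ _ E5 _ _ J5.
Definition J7 := @stepJ _ _ E6 _ _ J6.
Definition J8 := @stepJ _ _ E7 _ _ J7.
Lemma cst8E : cst8 = D8.
Proof. refine (@JMeq_eq (K -> P8) cst8 D8 _). exact_no_check J8. Qed.

Lemma rm_id (R : comNzRingType) : rm (fun k : R => k). Proof. by split. Qed.
Lemma rmD1 : rm D1. Proof. exact: (rm_polyC (rm_id K)). Qed.
Lemma rmD2 : rm D2. Proof. exact: (rm_polyC rmD1). Qed.
Lemma rmD3 : rm D3. Proof. exact: (rm_polyC rmD2). Qed.
Lemma rmD4 : rm D4. Proof. exact: (rm_polyC rmD3). Qed.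
Lemma rmD5 : rm D5. Proof. exact: (rm_polyC rmD4). Qed.
Lemma rmD6 : rm D6. Proof. exact: (rm_polyC rmD5). Qed.
Lemma rmD7 : rm D7. Proof. exact: (rm_polyC rmD6). Qed.
Lemma rmD8 : rm D8. Proof. exact: (rm_polyC rmD7). Qed.
Lemma rmcst8 : rm cst8. Proof. by rewrite cst8E; exact: rmD8. Qed.

Lemma two8 : (1 + 1 : P8) = 0.
Proof.
rewrite -(rm1 rmD8) -(rmD rmD8).
have -> : (1 + 1 : K) = 0 by apply/eqP.
exact: (rm0 rmD8).
Qed.

Section Ev.
Variables x1 x2 x3 x4 x5 : P8.
Definition G1 := fun p1 : P1 => (map_poly cst8 p1).[x1].
Definition G2 := fun p2 : P2 => (map_poly G1 p2).[x2].
Definition G3 := fun p3 : P3 => (map_poly G2 p3).[x3].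
Definition G4 := fun p4 : P4 => (map_poly G3 p4).[x4].
Lemma rmG1 : rm G1. Proof. exact: (rm_horner rmcst8). Qed.
Lemma rmG2 : rm G2. Proof. exact: (rm_horner rmG1). Qed.
Lemma rmG3 : rm G3. Proof. exact: (rm_horner rmG2). Qed.
Lemma rmG4 : rm G4. Proof. exact: (rm_horner rmG3). Qed.
Lemma rm_ev5 : rm (ev5 x1 x2 x3 x4 x5). Proof. exact: (rm_horner rmG4). Qed.
Lemma ev5E p : ev5 x1 x2 x3 x4 x5 p = (map_poly G4 p).[x5]. Proof. by []. Qed.
Lemma ev_rho : ev5 x1 x2 x3 x4 x5 rho5 = x1.
Proof. by rewrite ev5E (hC rmG4) /G4 (hC rmG3) /G3 (hC rmG2) /G2 (hC rmG1) /G1 (hX rmcst8). Qed.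
Lemma ev_tau : ev5 x1 x2 x3 x4 x5 tau5 = x2.
Proof. by rewrite ev5E (hC rmG4) /G4 (hC rmG3) /G3 (hC rmG2) /G2 (hX rmG1). Qed.
Lemma ev_xi : ev5 x1 x2 x3 x4 x5 xi5 = x3.
Proof. by rewrite ev5E (hC rmG4) /G4 (hC rmG3) /G3 (hX rmG2). Qed.
Lemma ev_tau0 : ev5 x1 x2 x3 x4 x5 tau05 = x4.
Proof. by rewrite ev5E (hC rmG4) /G4 (hX rmG3). Qed.
Lemma ev_tau1 : ev5 x1 x2 x3 x4 x5 tau15 = x5.
Proof. by rewrite ev5E (hX rmG4). Qed.
End Ev.

Lemma iotaL_rho5 : iotaL rho5 = rho8.
Proof. rewrite /iotaL; exact: ev_rho. Qed.
Lemma iotaL_tau5 : iotaL tau5 = tau8.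
Proof. rewrite /iotaL; exact: ev_tau. Qed.
Lemma iotaL_xi5 : iotaL xi5 = xi8.
Proof. rewrite /iotaL; exact: ev_xi. Qed.
Lemma iotaL_tau05 : iotaL tau05 = tau08.
Proof. rewrite /iotaL; exact: ev_tau0. Qed.
Lemma iotaL_tau15 : iotaL tau15 = tau18.
Proof. rewrite /iotaL; exact: ev_tau1. Qed.
Lemma rm_iotaL : rm iotaL. Proof. rewrite /iotaL; exact: rm_ev5. Qed.
Lemma iotaR_rho5 : iotaR rho5 = rho8.
Proof. rewrite /iotaR; exact: ev_rho. Qed.
Lemma iotaR_tau5 : iotaR tau5 = tau8 + rho8 * tau08.
Proof. rewrite /iotaR; exact: ev_tau. Qed.
Lemma iotaR_xi5 : iotaR xi5 = xi8'.
Proof. rewrite /iotaR; exact: ev_xi. Qed.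
Lemma iotaR_tau05 : iotaR tau05 = tau08'.
Proof. rewrite /iotaR; exact: ev_tau0. Qed.
Lemma iotaR_tau15 : iotaR tau15 = tau18'.
Proof. rewrite /iotaR; exact: ev_tau1. Qed.
Lemma rm_iotaR : rm iotaR. Proof. rewrite /iotaR; exact: rm_ev5. Qed.
Lemma Delta_rho5 : Delta rho5 = rho8.
Proof. rewrite /Delta; exact: ev_rho. Qed.
Lemma Delta_tau5 : Delta tau5 = tau8.
Proof. rewrite /Delta; exact: ev_tau. Qed.
Lemma Delta_xi5 : Delta xi5 = xi8 + xi8'.
Proof. rewrite /Delta; exact: ev_xi. Qed.
Lemma Delta_tau05 : Delta tau05 = tau08 + tau08'.
Proof. rewrite /Delta; exact: ev_tau0. Qed.
Lemma Delta_tau15 : Delta tau15 = tau18 + xi8 * tau08' + tau18'.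
Proof. rewrite /Delta; exact: ev_tau1. Qed.
Lemma rm_Delta : rm Delta. Proof. rewrite /Delta; exact: rm_ev5. Qed.

Definition cc5 : P5 := tau5 ^+ 2 * tau15 + tau5 ^+ 2 * xi5 * tau05.
Definition q2 : P8 := rho8 * tau08' ^+ 2 + rho8 * tau8 * xi8' + rho8 ^+ 2 * tau18'
    + rho8 ^+ 2 * xi8' * tau08' + rho8 ^+ 2 * tau08 * xi8'.
Definition q5 : P8 := rho8 * tau8 * xi8 + rho8 ^+ 2 * tau18 + rho8 ^+ 2 * xi8 * tau08.
Definition H0 := @ident P8 two8 iotaL iotaR Delta.
Definition H1 := H0 rm_iotaL.
Definition H2 := H1 rm_iotaR.
Definition H3 := H2 rm_Delta.
Definition H4 := @H3 rho8 tau8 xi8 tau08 tau18 xi8' tau08' tau18' rho5 tau5 xi5 tau05 tau15.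
Definition H5 := H4 iotaL_rho5.
Definition H6 := H5 iotaL_tau5 iotaL_xi5 iotaL_tau05 iotaL_tau15.
Definition H7 := H6 iotaR_tau5.
Definition H8 := H7 iotaR_xi5 iotaR_tau05 iotaR_tau15.
Definition H9 := H8 Delta_tau5 Delta_xi5 Delta_tau05 Delta_tau15.
Definition RHS := q2 * (tau08 ^+ 2 - rho8 * tau18 - rho8 * tau08 * xi8 - tau8 * xi8)
  + q5 * (tau08' ^+ 2 - rho8 * tau18' - rho8 * tau08' * xi8' - (tau8 + rho8 * tau08) * xi8').
Definition LA := iotaR cc5 + Delta cc5 + iotaL cc5.
Definition LB := (iotaL a_rep * iotaR eta_rep - rho8 * (iotaL eta0_rep * iotaR eta0_rep)).
Definition T9 := ltac:(match type of H9 with ?L - ?M = ?R => exact (L, M, R) end).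
Lemma kR : T9.2 = RHS. Proof. exact erefl. Qed.
Lemma kLA : T9.1.1 = LA. Proof. exact erefl. Qed.
Lemma kLB : T9.1.2 = LB. Proof. exact erefl. Qed.
Lemma step1 : LA - LB = RHS.
Proof. rewrite -kR -kLA -kLB. exact H9. Qed.
Lemma stepL : cobar_d1 cc5 - (cobar_mul11 a_rep eta_rep - rho8 * cobar_mul11 eta0_rep eta0_rep) = LA - LB.
Proof. exact erefl. Qed.
Lemma stepR : q2 * GG_rels`_2 + q5 * GG_rels`_5 = RHS.
Proof. exact erefl. Qed.
Theorem mainTheorem12 :
  exists c : P5,
    eqGG (cobar_d1 c)
         (cobar_mul11 a_rep eta_rep - rho8 * cobar_mul11 eta0_rep eta0_rep).
Proof.
exists cc5.
rewrite /eqGG /in_ideal.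
exists [:: 0; 0; q2; 0; 0; q5].
split; first by [].
rewrite sum6 //.
rewrite stepL stepR.
exact step1.
Qed.
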